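(* Let $(V,\{A,B\})$ be a forking problem in which every agent's preference is non-interleaving. Then the profile admits exactly one stable assignment.
   Context: Agents $V=\{v_1,\dots,v_n\}$; two alternatives $A,B$. Each agent $v_i$ has a strict total order $\succ_i$ on $\{A,B\}\times\{1,\dots,n\}$, where $(S,j)$ means being in the community adopting $S$ of size $j$; it is monotonic if $(S,j)\succ_i(S,k)$ whenever $k<j$. A preference is non-interleaving if it is monotonic and either $(A,1)\succ_i(B,n)$ or $(B,1)\succ_i(A,n)$. An assignment is a map $f:V\to\{A,B\}$; $v_i$ prefers $f$ to $g$ if $(f(v_i),|f^{-1}(f(v_i))|)\succ_i(g(v_i),|g^{-1}(g(v_i))|)$. An assignment $f$ is stable if there is no assignment $f'\neq f$ such that every agent $v_i$ with $f'(v_i)\neq f(v_i)$ prefers $f'$ to $f$. *)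

(* Defs.v *)
From HB Require Import structures.
From mathcomp Require Import all_boot.
Set Implicit Arguments. Unset Strict Implicit. Unset Printing Implicit Defensive.

Inductive alt := A | B.
Definition alt2bool (s : alt) : bool := if s is A then true else false.
Definition bool2alt (b : bool) : alt := if b then A else B.
Lemma alt2boolK : cancel alt2bool bool2alt. Proof. by case. Qed.
HB.instance Definition _ := Equality.copy alt (can_type alt2boolK).

(* A position (S, j): being in the community adopting S, of size j.
   Sizes are natural numbers; only sizes 1..n are meaningful. *)
Definition position := (alt * nat)%type.

Definition in_range (n : nat) (x : position) : Prop := 1 <= x.2 <= n.

Definition strict_total_order (n : nat) (r : position -> position -> bool) : Prop :=
  [/\ (forall x, in_range n x -> ~~ r x x),
      (forall x y z, in_range n x -> in_range n y -> in_range n z ->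
         r x y -> r y z -> r x z)
    & (forall x y, in_range n x -> in_range n y -> x <> y -> r x y \/ r y x)].

Definition monotonic (n : nat) (r : position -> position -> bool) : Prop :=
  forall (S : alt) (j k : nat), 1 <= k -> k < j -> j <= n -> r (S, j) (S, k).

Definition non_interleaving (n : nat) (r : position -> position -> bool) : Prop :=
  monotonic n r /\ (r (A, 1) (B, n) \/ r (B, 1) (A, n)).

Definition assignment (n : nat) := {ffun 'I_n -> alt}.

Definition comm_size (n : nat) (f : assignment n) (v : 'I_n) : nat :=
  #|[set u | f u == f v]|.

Definition prefers (n : nat) (pref : 'I_n -> position -> position -> bool)
  (v : 'I_n) (f g : assignment n) : bool :=
  pref v (f v, comm_size f v) (g v, comm_size g v).

Definition stable (n : nat) (pref : 'I_n -> position -> position -> bool)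
  (f : assignment n) : Prop :=
  ~ exists f' : assignment n,
      f' <> f /\ forall v, f' v <> f v -> prefers pref v f' f.

(* Main.v *)
Require Import Defs.
From mathcomp Require Import all_boot.

Definition other (S : alt) : alt := if S is A then B else A.

Lemma neq_other (S T : alt) : T <> S -> T = other S.
Proof. by case: S; case: T. Qed.

Lemma comm_size_range n (f : assignment n) (v : 'I_n) (S : alt) :
  in_range n (S, comm_size f v).
Proof.
rewrite /in_range /comm_size /=; apply/andP; split.
  by rewrite card_gt0; apply/set0Pn; exists v; rewrite inE.
by apply: leq_trans (max_card _) _; rewrite card_ord.
Qed.

Section Top.
Variables (n : nat) (r : position -> position -> bool).
Hypotheses (Hs : strict_total_order n r) (Hn : non_interleaving n r).

Definition topr : alt := if r (A, 1) (B, n) then A else B.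

Lemma top_best j k : 1 <= j <= n -> 1 <= k <= n ->
  r (topr, j) (other topr, k) /\ ~~ r (other topr, k) (topr, j).
Proof.
case: Hs => irr tr _; case: Hn => mon hor => /andP[j1 jn] /andP[k1 kn].
have n1 : 1 <= n by apply: leq_trans jn.
have base : r (topr, 1) (other topr, n).
  rewrite /topr; case: ifP => // h; case: hor => //; by rewrite h.
have rg x : 1 <= x <= n -> forall S, in_range n (S, x) by move=> hx S.
have h1 : r (topr, j) (other topr, k).
  have e1 : r (topr, j) (other topr, n).
    case: (ltngtP 1 j) => [lt||<-] //; last by rewrite ltnNge j1.
    apply: (tr _ (topr, 1)) => //; try exact/andP; try by rewrite /in_range /= leqnn.
    exact: mon.
  case: (ltngtP k n) => [lt||->] //; last by rewrite ltnNge kn.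
  apply: (tr _ (other topr, n)) => //; try exact/andP; try by rewrite /in_range /= leqnn.
  exact: mon.
split=> //; apply/negP => h2.
have := irr (topr, j); rewrite /in_range /= j1 jn => /(_ isT)/negP; apply.
apply: (tr _ (other topr, k)) => //; rewrite /in_range /= ?j1 ?jn ?k1 ?kn //.
Qed.
End Top.

Theorem mainTheorem2 (n : nat) (pref : 'I_n -> position -> position -> bool) :
  (forall v, strict_total_order n (pref v)) ->
  (forall v, non_interleaving n (pref v)) ->
  exists! f : assignment n, stable pref f.
Proof.
move=> Hs Hn.
pose fs : assignment n := [ffun v => topr n (pref v)].
have key v (f g : assignment n) : f v = topr n (pref v) -> g v <> f v ->
   pref v (f v, comm_size f v) (g v, comm_size g v) /\
   ~~ pref v (g v, comm_size g v) (f v, comm_size f v).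
  move=> ef ng; rewrite (@neq_other _ _ ng) ef.
  by apply: top_best; [apply: Hs | apply: Hn | apply: comm_size_range A ..].
exists fs; split.
  move=> [f' [ne H]]; apply: ne; apply/ffunP => v.
  case: (eqVneq (f' v) (fs v)) => // nv.
  have := H v (elimN eqP nv); rewrite /prefers.
  have [_ /negP] := key v fs f' (ffunE _ _) (elimN eqP nv); by [].
move=> f Hf; case: (eqVneq fs f) => // ne; exfalso; apply: Hf.
exists fs; split; first exact/eqP.
move=> v nv; rewrite /prefers.
by have [] := key v fs f (ffunE _ _) (fun e => nv (esym e)).
Qed.
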